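(* Let $\mathcal T$, $e_0$, $\mathcal T_0$, $\mathcal T_1$, the coordinate $x$, the set $\sigma_1$, the function $\mu^-(\lambda)$ and the functions $U(x,\lambda)$, $V(x,\lambda)$ on $[0,1]$ be as in the context. If $\lambda\in\mathbb C\setminus\sigma_1$, then $V(\cdot,\lambda)$ may be extended to a solution of $-y''=\lambda y$ on $\mathcal T_0$, depending only on $x\in[0,\infty)$, which is continuous and satisfies the jump conditions $y'(x^+)=y'(x^-)/\delta_R$ for even integers $x>0$ and $y'(x^+)=y'(x^-)/\delta_B$ for odd integers $x>0$ (hence the vertex conditions $\sum_{e\sim v}\partial_\nu y_e(v)=0$ at all vertices of $\mathcal T_0$ with $x>0$), and this extension is square integrable on $\mathcal T_0$. Analogously, $U(\cdot,\lambda)$ may be extended to a solution of $-y''=\lambda y$ on $\mathcal T_1$, depending only on $x\in(-\infty,1]$, which is continuous and satisfies $y'(x^-)=y'(x^+)/\delta_R$ for even integers $x<1$ and $y'(x^-)=y'(x^+)/\delta_B$ for odd integers $x<1$ (hence the vertex conditions at all vertices of $\mathcal T_1$ with $x<1$), and this extension is square integrable on $\mathcal T_1$.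
   Context: $\mathcal T$ is the infinite biregular tree: vertices split into classes $\mathcal V_R,\mathcal V_B$, each edge joins $\mathcal V_R$ to $\mathcal V_B$, vertices in $\mathcal V_B$ have degree $\delta_B+1$ and in $\mathcal V_R$ degree $\delta_R+1$ ($\delta_B,\delta_R\ge1$ integers); every edge is identified with $[0,1]$. Fix an edge $e_0=\{r_0,b_0\}$ with $r_0\in\mathcal V_R$, identified with $[0,1]$ so that $r_0\leftrightarrow0$, $b_0\leftrightarrow1$. $\mathcal T_0$ is the union of all nonbacktracking rays with vertex sequence $r_0,b_0,r_1,b_1,\dots$; a point of $\mathcal T_0$ gets coordinate $x\in[0,\infty)$ = its distance from $r_0$ (so even integers are $R$-vertices, odd integers $B$-vertices). $\mathcal T_1$ is the union of all nonbacktracking rays with vertex sequence $b_0,r_0,b_{-1},r_{-1},\dots$; a point gets coordinate $x=1-(\text{distance from }b_0)\in(-\infty,1]$. With $\omega=\sqrt\lambda$ put $c=\cos\omega$, $c'=-\omega\sin\omega$, $s=\sin\omega/\omega$, $s'=\cos\omega$, $M_0=\begin{pmatrix}c&s\\c'&s'\end{pmatrix}$, $J_B=\operatorname{diag}(1,1/\delta_B)$, $J_R=\operatorname{diag}(1,1/\delta_R)$, $T_0(\lambda)=J_RM_0J_BM_0$, and $\sigma_1=\{\lambda\in\mathbb C: T_0(\lambda)$ has an eigenvalue of modulus $(\delta_B\delta_R)^{-1/2}\}$. On $\mathbb C\setminus\sigma_1$, $\mu^-(\lambda)$ denotes the analytic choice of eigenvalue of $T_0(\lambda)$ with $|\mu^-(\lambda)|<(\delta_B\delta_R)^{-1/2}$.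 For $x\in[0,1]$, $V(x,\lambda)=sc(1+\tfrac1{\delta_B})\cos(\omega x)+[\mu^--c^2-\tfrac{sc'}{\delta_B}]\tfrac{\sin(\omega x)}{\omega}$ and $U(x,\lambda)=-sc(1+\tfrac1{\delta_R})\cos(\omega(1-x))-[\mu^--c^2-\tfrac{sc'}{\delta_R}]\tfrac{\sin(\omega(1-x))}{\omega}$. *)

(* Defs.v *)
From Stdlib Require Import Reals.
From Coquelicot Require Import Coquelicot.
Open Scope R_scope.

Definition Ccos (z : C) : C :=
  (cos (Re z) * cosh (Im z), - (sin (Re z) * sinh (Im z))).
Definition Csin (z : C) : C :=
  (sin (Re z) * cosh (Im z), cos (Re z) * sinh (Im z)).

(* sin(w x)/w, with its value x at w = 0 (the entire function of w^2). *)
Definition Csinc (w : C) (x : R) : C :=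
  if Ceq_dec w 0%C then RtoC x else (Csin (w * RtoC x) / w)%C.

Definition cc (w : C) : C := Ccos w.
Definition cc' (w : C) : C := (- (w * Csin w))%C.
Definition ss (w : C) : C := Csinc w 1.
Definition ss' (w : C) : C := Ccos w.

Definition mat2 : Type := ((C * C) * (C * C))%type.
Definition mk2 (a b c d : C) : mat2 := ((a, b), (c, d)).
Definition m11 (A : mat2) : C := fst (fst A).
Definition m12 (A : mat2) : C := snd (fst A).
Definition m21 (A : mat2) : C := fst (snd A).
Definition m22 (A : mat2) : C := snd (snd A).
Definition mul2 (A B : mat2) : mat2 :=
  mk2 (m11 A * m11 B + m12 A * m21 B)%C (m11 A * m12 B + m12 A * m22 B)%C
      (m21 A * m11 B + m22 A * m21 B)%C (m21 A * m12 B + m22 A * m22 B)%C.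

Definition is_eigenvalue (A : mat2) (mu : C) : Prop :=
  exists v1 v2 : C, (v1 <> 0%C \/ v2 <> 0%C) /\
    (m11 A * v1 + m12 A * v2 = mu * v1)%C /\
    (m21 A * v1 + m22 A * v2 = mu * v2)%C.

Definition M0 (w : C) : mat2 := mk2 (cc w) (ss w) (cc' w) (ss' w).
Definition Jd (d : nat) : mat2 := mk2 1%C 0%C 0%C (RtoC (/ INR d)).

Definition T0 (dB dR : nat) (w : C) : mat2 :=
  mul2 (Jd dR) (mul2 (M0 w) (mul2 (Jd dB) (M0 w))).

(* lambda (with square root w) lies in sigma_1 *)
Definition in_sigma1 (dB dR : nat) (w : C) : Prop :=
  exists mu : C, is_eigenvalue (T0 dB dR w) mu /\
    Cmod mu = / sqrt (INR dB * INR dR).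

Definition Vfun (dB : nat) (w mu : C) (x : R) : C :=
  (ss w * cc w * (1 + RtoC (/ INR dB)) * Ccos (w * RtoC x)
   + (mu - cc w * cc w - ss w * cc' w * RtoC (/ INR dB)) * Csinc w x)%C.

Definition Ufun (dR : nat) (w mu : C) (x : R) : C :=
  (- (ss w * cc w * (1 + RtoC (/ INR dR)) * Ccos (w * RtoC (1 - x)))
   - (mu - cc w * cc w - ss w * cc' w * RtoC (/ INR dR)) * Csinc w (1 - x))%C.

Definition is_rderive (f : R -> C) (x : R) (l : C) : Prop :=
  filterlim (fun h : R => scal (/ h) (minus (f (x + h)) (f x)))
            (at_right 0) (locally l).
Definition is_lderive (f : R -> C) (x : R) (l : C) : Prop :=
  filterlim (fun h : R => scal (/ h) (minus (f (x + h)) (f x)))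
            (at_left 0) (locally l).

(* T_0: the segment k <= x <= k+1 consists of dB^ceil(k/2) * dR^floor(k/2)
   edges (1, dB, dB dR, dB^2 dR, ...). *)
Definition nedges0 (dB dR k : nat) : R :=
  INR (dB ^ (Nat.div (S k) 2) * dR ^ (Nat.div k 2)).
(* T_1: the segment -k <= x <= 1-k consists of dR^ceil(k/2) * dB^floor(k/2)
   edges (1, dR, dR dB, dR^2 dB, ...). *)
Definition nedges1 (dB dR k : nat) : R :=
  INR (dR ^ (Nat.div (S k) 2) * dB ^ (Nat.div k 2)).

Definition radial_sol_T0 (dB dR : nat) (lam : C) (y : R -> C) : Prop :=
  (forall x : R, 0 < x -> continuous y x) /\
  (exists dy : R -> C, forall (k : nat) (x : R), INR k < x < INR k + 1 ->
     is_derive y x (dy x) /\ is_derive dy x (- (lam * y x))%C) /\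
  (forall k : nat, (1 <= k)%nat ->
     exists dl dr : C, is_lderive y (INR k) dl /\ is_rderive y (INR k) dr /\
       dr = (dl * RtoC (/ INR (if Nat.even k then dR else dB)))%C) /\
  ex_series (fun k : nat =>
     nedges0 dB dR k * RInt (fun x => (Cmod (y x)) ^ 2) (INR k) (INR k + 1)).

Definition radial_sol_T1 (dB dR : nat) (lam : C) (y : R -> C) : Prop :=
  (forall x : R, x < 1 -> continuous y x) /\
  (exists dy : R -> C, forall (k : nat) (x : R), - INR k < x < 1 - INR k ->
     is_derive y x (dy x) /\ is_derive dy x (- (lam * y x))%C) /\
  (forall k : nat,
     exists dl dr : C, is_lderive y (- INR k) dl /\ is_rderive y (- INR k) dr /\
       dl = (dr * RtoC (/ INR (if Nat.even k then dR else dB)))%C) /\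
  ex_series (fun k : nat =>
     nedges1 dB dR k * RInt (fun x => (Cmod (y x)) ^ 2) (- INR k) (1 - INR k)).

(* Main.v *)
Require Import Defs.
From Stdlib Require Import Reals.
From Coquelicot Require Import Coquelicot.
From Stdlib Require Import Lia Lra.
Open Scope R_scope.

Lemma D_fst (f : R -> C) x l : is_derive f x l -> is_derive (fun t : R => fst (f t)) x (fst l).
Proof.
  intros H. unfold is_derive in *.
  eapply filterdiff_ext_lin.
  eapply (filterdiff_comp f (fun c : C => fst c)). exact H.
  apply filterdiff_linear. apply (@is_linear_fst R_AbsRing R_NormedModule R_NormedModule).
  intros y. simpl. reflexivity.
Qed.
Lemma D_snd (f : R -> C) x l : is_derive f x l -> is_derive (fun t : R => snd (f t)) x (snd l).
Proof.
  intros H. unfold is_derive in *.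
  eapply filterdiff_ext_lin.
  eapply (filterdiff_comp f (fun c : C => snd c)). exact H.
  apply filterdiff_linear. apply (@is_linear_snd R_AbsRing R_NormedModule R_NormedModule).
  intros y. simpl. reflexivity.
Qed.
Lemma D_pair (f1 f2 : R -> R) x l1 l2 : is_derive f1 x l1 -> is_derive f2 x l2 ->
  is_derive (fun t : R => (f1 t, f2 t) : C) x ((l1, l2) : C).
Proof.
  intros H1 H2.
  assert (H := @is_derive_plus R_AbsRing C_R_NormedModule _ _ x _ _
     (@is_derive_scal_l R_AbsRing C_R_NormedModule f1 x l1 ((1,0):C) H1)
     (@is_derive_scal_l R_AbsRing C_R_NormedModule f2 x l2 ((0,1):C) H2)).
  eapply is_derive_ext. 2: { 
  replace ((l1,l2):C) with (@plus C_R_NormedModule (scal l1 ((1,0):C)) (scal l2 ((0,1):C))). exact H.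
  apply injective_projections; simpl; unfold plus, scal; simpl; unfold mult; simpl; ring. }
  intros t. apply injective_projections; simpl; unfold plus, scal; simpl; unfold mult; simpl; ring.
Qed.
Lemma D_C (f : R -> C) x l : is_derive (fun t : R => fst (f t)) x (fst l) ->
  is_derive (fun t : R => snd (f t)) x (snd l) -> is_derive f x l.
Proof.
  intros H1 H2. destruct l as [l1 l2].
  eapply is_derive_ext. 2: exact (D_pair _ _ x l1 l2 H1 H2).
  intros t. simpl. destruct (f t); reflexivity.
Qed.

Ltac dsolve :=
  auto_derive; [ repeat split; try (eexists; eassumption) |
    repeat match goal with
      | H : is_derive ?g ?y ?l |- context [Derive ?f ?y] =>
          rewrite (is_derive_unique f y l H)
    end ].

Lemma Rmulsub_der (a b c d : R -> R) x la lb lc ld v :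
  is_derive a x la -> is_derive b x lb -> is_derive c x lc -> is_derive d x ld ->
  v = la * b x + a x * lb - (lc * d x + c x * ld) ->
  is_derive (fun t : R => a t * b t - c t * d t) x v.
Proof. intros Ha Hb Hc Hd ->. dsolve. ring. Qed.
Lemma Rmuladd_der (a b c d : R -> R) x la lb lc ld v :
  is_derive a x la -> is_derive b x lb -> is_derive c x lc -> is_derive d x ld ->
  v = la * b x + a x * lb + (lc * d x + c x * ld) ->
  is_derive (fun t : R => a t * b t + c t * d t) x v.
Proof. intros Ha Hb Hc Hd ->. dsolve. ring. Qed.
Lemma Radd_der (a b : R -> R) x la lb v :
  is_derive a x la -> is_derive b x lb -> v = la + lb ->
  is_derive (fun t : R => a t + b t) x v.
Proof. intros Ha Hb ->. dsolve. ring. Qed.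

Lemma D_mul (f g : R -> C) x l m : is_derive f x l -> is_derive g x m ->
  is_derive (fun t : R => (f t * g t)%C) x (l * g x + f x * m)%C.
Proof.
  intros Hf Hg.
  pose proof (D_fst _ _ _ Hf) as Hf1. pose proof (D_snd _ _ _ Hf) as Hf2.
  pose proof (D_fst _ _ _ Hg) as Hg1. pose proof (D_snd _ _ _ Hg) as Hg2.
  simpl in *. apply D_C; simpl.
  - eapply Rmulsub_der; [exact Hf1|exact Hg1|exact Hf2|exact Hg2|]. simpl. ring.
  - eapply Rmuladd_der; [exact Hf1|exact Hg2|exact Hf2|exact Hg1|]. simpl. ring.
Qed.
Lemma D_add (f g : R -> C) x l m : is_derive f x l -> is_derive g x m ->
  is_derive (fun t : R => (f t + g t)%C) x (l + m)%C.
Proof.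
  intros Hf Hg.
  pose proof (D_fst _ _ _ Hf) as Hf1. pose proof (D_snd _ _ _ Hf) as Hf2.
  pose proof (D_fst _ _ _ Hg) as Hg1. pose proof (D_snd _ _ _ Hg) as Hg2.
  simpl in *. apply D_C; simpl.
  - eapply Radd_der; [exact Hf1|exact Hg1|]. simpl. ring.
  - eapply Radd_der; [exact Hf2|exact Hg2|]. simpl. ring.
Qed.
Lemma D_const (c : C) (x : R) : is_derive (fun _ : R => c) x (RtoC 0).
Proof. apply D_C; simpl; auto_derive; auto. Qed.

Lemma D_cmul (c : C) (f : R -> C) (x : R) (l : C) : is_derive f x l ->
  is_derive (fun t : R => (c * f t)%C) x (c * l)%C.
Proof.
  intros Hf. pose proof (D_mul (fun _ : R => c) f x (RtoC 0) l (D_const c x) Hf) as H.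
  simpl in H. replace (c * l)%C with (RtoC 0 * f x + c * l)%C by ring. exact H.
Qed.

Lemma Ccos_lin w t : Ccos (w * RtoC t) =
  ((cos (fst w * t) * cosh (snd w * t)), - (sin (fst w * t) * sinh (snd w * t))) :> C.
Proof.
  destruct w as [p q]. unfold Ccos, Cmult, RtoC, Re, Im; simpl.
  replace (p * t - q * 0) with (p*t) by ring. replace (p * 0 + q * t) with (q*t) by ring.
  reflexivity.
Qed.
Lemma Csin_lin w t : Csin (w * RtoC t) =
  ((sin (fst w * t) * cosh (snd w * t)), (cos (fst w * t) * sinh (snd w * t))) :> C.
Proof.
  destruct w as [p q]. unfold Csin, Cmult, RtoC, Re, Im; simpl.
  replace (p * t - q * 0) with (p*t) by ring. replace (p * 0 + q * t) with (q*t) by ring.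
  reflexivity.
Qed.

Lemma D_Ccos (w : C) (x : R) : is_derive (fun t : R => Ccos (w * RtoC t)) x (- (w * Csin (w * RtoC x)))%C.
Proof.
  eapply is_derive_ext. intros t. symmetry. apply Ccos_lin.
  rewrite Csin_lin. destruct w as [p q].
  apply D_C; simpl; auto_derive; auto; ring.
Qed.
Lemma D_Csin (w : C) (x : R) : is_derive (fun t : R => Csin (w * RtoC t)) x (w * Ccos (w * RtoC x))%C.
Proof.
  eapply is_derive_ext. intros t. symmetry. apply Csin_lin.
  rewrite Ccos_lin. destruct w as [p q].
  apply D_C; simpl; auto_derive; auto; ring.
Qed.

Lemma Ccos_0 w : Ccos (w * RtoC 0) = RtoC 1.
Proof. rewrite Ccos_lin. rewrite !Rmult_0_r, cos_0, sin_0, cosh_0, sinh_0.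
  apply injective_projections; simpl; ring. Qed.
Lemma Csin_0 w : Csin (w * RtoC 0) = RtoC 0.
Proof. rewrite Csin_lin. rewrite !Rmult_0_r, cos_0, sin_0, cosh_0, sinh_0.
  apply injective_projections; simpl; ring. Qed.
Lemma Csinc_0 w : Csinc w 0 = RtoC 0.
Proof. unfold Csinc. destruct (Ceq_dec w 0). reflexivity.
  rewrite Csin_0. field. exact n. Qed.
Lemma C_w1 w : (w * RtoC 1 = w)%C.
Proof. apply injective_projections; simpl; ring. Qed.

Lemma Csinc_mul w t : (w * Csinc w t = Csin (w * RtoC t))%C.
Proof. unfold Csinc. destruct (Ceq_dec w 0) as [->|n].
  - rewrite Csin_lin. simpl. rewrite !Rmult_0_l, sin_0, sinh_0.
    apply injective_projections; simpl; ring.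
  - field. exact n.
Qed.

Lemma D_Csinc (w : C) (x : R) : is_derive (fun t : R => Csinc w t) x (Ccos (w * RtoC x)).
Proof. unfold Csinc. destruct (Ceq_dec w 0) as [->|n].
  - rewrite Ccos_lin. simpl. rewrite !Rmult_0_l, cos_0, sin_0, cosh_0, sinh_0.
    apply D_C; simpl; auto_derive; auto; ring.
  - eapply is_derive_ext. intros t. unfold Cdiv. apply Cmult_comm.
    replace (Ccos (w * RtoC x)) with (/ w * (w * Ccos (w * RtoC x)))%C by (field; exact n).
    apply D_cmul. apply D_Csin.
Qed.

Definition gf (w : C) (s : C * C) (t : R) : C :=
  (fst s * Ccos (w * RtoC t) + snd s * Csinc w t)%C.
Definition gd (w : C) (s : C * C) (t : R) : C :=
  (fst s * (- (w * Csin (w * RtoC t))) + snd s * Ccos (w * RtoC t))%C.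

Lemma D_gf w s (x : R) : is_derive (gf w s) x (gd w s x).
Proof. unfold gf, gd. apply D_add; apply D_cmul. apply D_Ccos. apply D_Csinc. Qed.

Lemma D_gd w s (x : R) : is_derive (gd w s) x (- (w * w) * gf w s x)%C.
Proof. unfold gf, gd.
  eapply is_derive_ext. intros t.
  replace (fst s * - (w * Csin (w * RtoC t)))%C with ((- w * fst s) * Csin (w * RtoC t))%C by ring.
  reflexivity.
  replace (- (w * w) * (fst s * Ccos (w * RtoC x) + snd s * Csinc w x))%C
    with ((- w * fst s) * (w * Ccos (w * RtoC x)) + snd s * (- (w * Csin (w * RtoC x))))%C.
  apply D_add; apply D_cmul. apply D_Csin. apply D_Ccos.
  rewrite <- Csinc_mul. ring.
Qed.

Lemma D_shift (f : R -> C) (c x : R) l : is_derive f (x - c) l ->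
  is_derive (fun t : R => f (t - c)) x l.
Proof.
  intros H. assert (Hg : is_derive (fun t : R => t - c) x 1) by (auto_derive; auto; ring).
  pose proof (is_derive_comp f (fun t : R => t - c) x l 1 H Hg) as H2.
  eapply is_derive_ext. 2: exact (eq_ind _ (fun v => is_derive _ x v) H2 l (scal_one l)).
  intros; reflexivity.
Qed.
Lemma quot_lim (f : R -> C) (x : R) (l : C) : is_derive f x l ->
  filterlim (fun h : R => scal (/ h) (minus (f (x + h)) (f x))) (locally' 0) (locally l).
Proof.
  intros H. pose proof (D_fst _ _ _ H) as H1. pose proof (D_snd _ _ _ H) as H2.
  apply is_derive_Reals in H1, H2.
  apply (proj2 (@filterlim_locally R C_UniformSpace _ _ _ _)). intros eps.
  destruct (H1 eps (cond_pos eps)) as [d1 Hd1]. destruct (H2 eps (cond_pos eps)) as [d2 Hd2].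
  assert (Hd : 0 < Rmin d1 d2) by (apply Rmin_pos; apply cond_pos).
  exists (mkposreal _ Hd). intros h Hb Hh0. 
  change (ball 0 (Rmin d1 d2) h) in Hb. unfold ball in Hb; simpl in Hb. unfold AbsRing_ball in Hb.
  unfold abs, minus, plus, opp in Hb; simpl in Hb. rewrite Ropp_0, Rplus_0_r in Hb.

  assert (Ha1 : Rabs h < d1) by (eapply Rlt_le_trans; [exact Hb| apply Rmin_l]).
  assert (Ha2 : Rabs h < d2) by (eapply Rlt_le_trans; [exact Hb| apply Rmin_r]).
  specialize (Hd1 h Hh0 Ha1). specialize (Hd2 h Hh0 Ha2).
  split; unfold ball; simpl; unfold AbsRing_ball, abs, minus, plus, opp, scal; simpl;
  unfold mult; simpl.
  - replace (/ h * (fst (f (x + h)) + - fst (f x)) + - fst l) with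
      ((fst (f (x + h)) - fst (f x)) / h - fst l) by (field; exact Hh0). exact Hd1.
  - replace (/ h * (snd (f (x + h)) + - snd (f x)) + - snd l) with
      ((snd (f (x + h)) - snd (f x)) / h - snd l) by (field; exact Hh0). exact Hd2.
Qed.

Lemma rderive_of (f y : R -> C) (x : R) (l : C) : is_derive f x l ->
  (forall h, 0 < h < 1 -> y (x + h) = f (x + h)) -> y x = f x -> is_rderive y x l.
Proof.
  intros Hd Hy H0. unfold is_rderive.
  apply filterlim_ext_loc with (fun h : R => scal (/ h) (minus (f (x + h)) (f x))).
  - exists (mkposreal 1 Rlt_0_1). intros h Hb Hh. simpl in Hh.
    change (Rabs (h - 0) < 1) in Hb. rewrite Rminus_0_r in Hb.
    rewrite Hy, H0. reflexivity. split. exact Hh. apply Rabs_def2 in Hb. lra.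
  - eapply filterlim_filter_le_1. 2: apply quot_lim; exact Hd.
    intros P [d Hd']. exists d. intros h Hb Hh. apply Hd'. exact Hb. lra.
Qed.

Lemma lderive_of (f y : R -> C) (x : R) (l : C) : is_derive f x l ->
  (forall h, -1 < h < 0 -> y (x + h) = f (x + h)) -> y x = f x -> is_lderive y x l.
Proof.
  intros Hd Hy H0. unfold is_lderive.
  apply filterlim_ext_loc with (fun h : R => scal (/ h) (minus (f (x + h)) (f x))).
  - exists (mkposreal 1 Rlt_0_1). intros h Hb Hh. simpl in Hh.
    change (Rabs (h - 0) < 1) in Hb. rewrite Rminus_0_r in Hb.
    rewrite Hy, H0. reflexivity. split. apply Rabs_def2 in Hb. lra. exact Hh.
  - eapply filterlim_filter_le_1. 2: apply quot_lim; exact Hd.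
    intros P [d Hd']. exists d. intros h Hb Hh. apply Hd'. exact Hb. lra.
Qed.

Lemma cont_glue (y f1 f2 : R -> C) (x : R) : continuous f1 x -> continuous f2 x ->
  (forall t, x - 1 < t <= x -> y t = f1 t) -> (forall t, x <= t < x + 1 -> y t = f2 t) ->
  continuous y x.
Proof.
  intros C1 C2 H1 H2. unfold continuous in *.
  assert (E1 : y x = f1 x) by (apply H1; lra).
  assert (E2 : y x = f2 x) by (apply H2; lra).
  apply (proj2 (@filterlim_locally R C_UniformSpace _ _ _ _)). intros eps.
  pose proof (proj1 (@filterlim_locally R C_UniformSpace _ _ _ _) C1 eps) as L1.
  pose proof (proj1 (@filterlim_locally R C_UniformSpace _ _ _ _) C2 eps) as L2.
  assert (L3 : locally x (fun t : R => x - 1 < t < x + 1)).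
  { apply (locally_interval _ x (x - 1) (x + 1)); simpl; try lra. auto. }
  generalize (filter_and _ _ (filter_and _ _ L1 L2) L3).
  apply filter_imp. intros t [[B1 B2] B3].
  destruct (Rle_lt_dec t x).
  - rewrite (H1 t), E1 by lra. exact B1.
  - rewrite (H2 t), E2 by lra. exact B2.
Qed.

Definition step (w : C) (d : nat) (s : C * C) : C * C :=
  ((cc w * fst s + ss w * snd s)%C, ((cc' w * fst s + ss' w * snd s) * RtoC (/ INR d))%C).
Fixpoint st (w : C) (dB dR : nat) (s0 : C * C) (k : nat) : C * C :=
  match k with
  | O => s0
  | S k' => step w (if Nat.even (S k') then dR else dB) (st w dB dR s0 k')
  end.

Lemma gf_1 w d s : gf w s 1 = fst (step w d s).
Proof. unfold gf, step. simpl. rewrite C_w1. unfold cc, ss. ring. Qed.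
Lemma gd_1 w d s : (gd w s 1 * RtoC (/ INR d))%C = snd (step w d s).
Proof. unfold gd, step. simpl. rewrite C_w1. unfold cc', ss'. ring. Qed.
Lemma gf_0 w s : gf w s 0 = fst s.
Proof. unfold gf. rewrite Ccos_0, Csinc_0. ring. Qed.
Lemma gd_0 w s : gd w s 0 = snd s.
Proof. unfold gd. rewrite Ccos_0, Csin_0. ring. Qed.

Definition fl (x : R) : nat := Z.to_nat (Int_part x).
Lemma fl_spec (k : nat) (x : R) : INR k <= x < INR k + 1 -> fl x = k.
Proof.
  intros H. unfold fl. rewrite <- (Int_part_spec x (Z.of_nat k)).
  apply Znat.Nat2Z.id. rewrite <- INR_IZR_INZ. lra.
Qed.

Definition yfun w dB dR s0 (x : R) : C :=
  gf w (st w dB dR s0 (fl x)) (x - INR (fl x)).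
Definition dyfun w dB dR s0 (x : R) : C :=
  gd w (st w dB dR s0 (fl x)) (x - INR (fl x)).

Lemma y_on w dB dR s0 (k : nat) (x : R) : INR k <= x <= INR k + 1 ->
  yfun w dB dR s0 x = gf w (st w dB dR s0 k) (x - INR k).
Proof.
  intros [H1 H2]. unfold yfun. destruct (Rlt_le_dec x (INR k + 1)).
  - rewrite (fl_spec k x) by lra. reflexivity.
  - assert (Ex : x = INR (S k)) by (rewrite S_INR; lra).
    rewrite (fl_spec (S k) x) by lra.
    rewrite Ex, Rminus_diag, gf_0. simpl st.
    rewrite <- (gf_1 w _ (st w dB dR s0 k)). rewrite S_INR. f_equal. ring.
Qed.

Lemma dy_on w dB dR s0 (k : nat) (x : R) : INR k <= x < INR k + 1 ->
  dyfun w dB dR s0 x = gd w (st w dB dR s0 k) (x - INR k).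
Proof. intros H. unfold dyfun. rewrite (fl_spec k x) by lra. reflexivity. Qed.

Lemma step_scal w d mu a b :
  step w d ((mu * a)%C, (mu * b)%C) =
  ((mu * fst (step w d (a, b)))%C, (mu * snd (step w d (a, b)))%C).
Proof. unfold step; simpl. f_equal; ring. Qed.

Lemma st_shift2 w dB dR s0 mu :
  st w dB dR s0 2 = ((mu * fst s0)%C, (mu * snd s0)%C) ->
  forall k, st w dB dR s0 (k + 2) =
    ((mu * fst (st w dB dR s0 k))%C, (mu * snd (st w dB dR s0 k))%C).
Proof.
  intros H2 k. induction k as [|k IH].
  - exact H2.
  - change (st w dB dR s0 (S k + 2)) with
      (step w (if Nat.even (S (k + 2)) then dR else dB) (st w dB dR s0 (k + 2))).
    rewrite IH. rewrite step_scal.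
    replace (Nat.even (S (k + 2))) with (Nat.even (S k)).
    2: { replace (S (k + 2)) with (S (S (S k))) by lia. reflexivity. }
    change (st w dB dR s0 (S k)) with (step w (if Nat.even (S k) then dR else dB) (st w dB dR s0 k)).
    destruct (st w dB dR s0 k) as [a b]. reflexivity.
Qed.

Lemma st_pow w dB dR s0 mu :
  st w dB dR s0 2 = ((mu * fst s0)%C, (mu * snd s0)%C) ->
  forall m j, st w dB dR s0 (2 * m + j) =
    ((mu ^ m * fst (st w dB dR s0 j))%C, (mu ^ m * snd (st w dB dR s0 j))%C).
Proof.
  intros H2 m j. induction m as [|m IH].
  - replace (2 * 0 + j)%nat with j by lia. destruct (st w dB dR s0 j) as [a b].
    cbn [fst snd Cpow]. f_equal; ring.
  - replace (2 * S m + j)%nat with ((2 * m + j) + 2)%nat by lia.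
    rewrite (st_shift2 w dB dR s0 mu H2), IH. cbn [fst snd Cpow]. f_equal; ring.
Qed.

Lemma gf_sh_der w s (c x : R) :
  is_derive (fun t : R => gf w s (t - c)) x (gd w s (x - c)).
Proof. apply D_shift. apply D_gf. Qed.
Lemma gf_sh_cont w s (c x : R) : continuous (fun t : R => gf w s (t - c)) x.
Proof. apply (@ex_derive_continuous R_AbsRing C_R_NormedModule). eexists. apply gf_sh_der. Qed.

Lemma T0_cont w dB dR s0 (x : R) : 0 < x -> continuous (yfun w dB dR s0) x.
Proof.
  intros Hx. set (k := fl x).
  assert (Hk : IZR (Int_part x) <= x /\ IZR (Int_part x) - x > -1) by apply base_Int_part.
  assert (HI : (0 <= Int_part x)%Z).
  { assert (Hm : IZR (-1) < IZR (Int_part x)) by (simpl; lra).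
    apply lt_IZR in Hm. lia. }
  assert (Ek : INR k = IZR (Int_part x)).
  { unfold k, fl. rewrite INR_IZR_INZ. rewrite Znat.Z2Nat.id by exact HI. reflexivity. }
  destruct (Rlt_or_le (INR k) x) as [Hlt|Hle].
  - apply (@ex_derive_continuous R_AbsRing C_R_NormedModule). exists (gd w (st w dB dR s0 k) (x - INR k)).
    apply (is_derive_ext_loc (fun t => gf w (st w dB dR s0 k) (t - INR k))).
    + apply (locally_interval _ x (INR k) (INR k + 1)); simpl; try lra.
      intros t H1 H2. symmetry. apply y_on. lra.
    + apply gf_sh_der.
  - assert (Ex : x = INR k) by lra.
    destruct k as [|k'] eqn:Ek'.
    + simpl in Ex. lra.
    + apply (cont_glue _ (fun t => gf w (st w dB dR s0 k') (t - INR k'))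
                         (fun t => gf w (st w dB dR s0 (S k')) (t - INR (S k')))).
      * apply gf_sh_cont.
      * apply gf_sh_cont.
      * intros t Ht. apply y_on. rewrite S_INR in Ex. lra.
      * intros t Ht. apply y_on. lra.
Qed.

Lemma T0_der w dB dR s0 (k : nat) (x : R) : INR k < x < INR k + 1 ->
  is_derive (yfun w dB dR s0) x (dyfun w dB dR s0 x) /\
  is_derive (dyfun w dB dR s0) x (- ((w * w) * yfun w dB dR s0 x))%C.
Proof.
  intros H. rewrite (dy_on w dB dR s0 k x) by lra. rewrite (y_on w dB dR s0 k x) by lra.
  split.
  - apply (is_derive_ext_loc (fun t => gf w (st w dB dR s0 k) (t - INR k))).
    + apply (locally_interval _ x (INR k) (INR k + 1)); simpl; try lra.
      intros t H1 H2. symmetry. apply y_on. lra.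
    + apply gf_sh_der.
  - apply (is_derive_ext_loc (fun t => gd w (st w dB dR s0 k) (t - INR k))).
    + apply (locally_interval _ x (INR k) (INR k + 1)); simpl; try lra.
      intros t H1 H2. symmetry. apply dy_on. lra.
    + replace (- (w * w * gf w (st w dB dR s0 k) (x - INR k)))%C
        with (- (w * w) * gf w (st w dB dR s0 k) (x - INR k))%C by ring.
      apply D_shift. apply D_gd.
Qed.

Lemma T0_jump w dB dR s0 (k : nat) : (1 <= k)%nat ->
  exists dl dr : C, is_lderive (yfun w dB dR s0) (INR k) dl /\
    is_rderive (yfun w dB dR s0) (INR k) dr /\
    dr = (dl * RtoC (/ INR (if Nat.even k then dR else dB)))%C.
Proof.
  intros Hk. destruct k as [|k']; [lia|].
  exists (gd w (st w dB dR s0 k') 1), (snd (st w dB dR s0 (S k'))).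
  assert (E : INR (S k') - INR k' = 1) by (rewrite S_INR; ring).
  split; [|split].
  - apply (lderive_of (fun t => gf w (st w dB dR s0 k') (t - INR k'))).
    + apply D_shift. rewrite E. apply D_gf.
    + intros h Hh. apply y_on. rewrite S_INR. lra.
    + apply y_on. rewrite S_INR. lra.
  - apply (rderive_of (fun t => gf w (st w dB dR s0 (S k')) (t - INR (S k')))).
    + apply D_shift. rewrite Rminus_diag, <- (gd_0 w (st w dB dR s0 (S k'))). apply D_gf.
    + intros h Hh. apply y_on. lra.
    + apply y_on. lra.
  - change (st w dB dR s0 (S k')) with
      (step w (if Nat.even (S k') then dR else dB) (st w dB dR s0 k')).
    rewrite <- (gd_1 w). reflexivity.
Qed.

Lemma sq_cont (a b : R -> R) (z la lb : R) : is_derive a z la -> is_derive b z lb ->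
  continuous (fun t => a t ^ 2 + b t ^ 2) z.
Proof.
  intros Ha Hb. apply (@ex_derive_continuous R_AbsRing R_NormedModule). eexists.
  auto_derive. repeat split; eexists; eassumption. reflexivity.
Qed.

Lemma cmod2_cont w s (z : R) : continuous (fun t => Cmod (gf w s t) ^ 2) z.
Proof.
  eapply continuous_ext. intros t. symmetry. apply Cmod2_alt.
  pose proof (D_gf w s z) as H.
  exact (sq_cont _ _ z _ _ (D_fst _ _ _ H) (D_snd _ _ _ H)).
Qed.

Definition Iq w s := RInt (fun t => Cmod (gf w s t) ^ 2) 0 1.

Lemma int_shift w dB dR s0 k :
  RInt (fun x => Cmod (yfun w dB dR s0 x) ^ 2) (INR k) (INR k + 1) = Iq w (st w dB dR s0 k).
Proof.
  rewrite (RInt_ext _ (fun x => scal 1 ((fun t => Cmod (gf w (st w dB dR s0 k) t) ^ 2) (1 * x + - INR k)))).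
  2: { intros x Hx. rewrite Rmin_left in Hx by lra. rewrite Rmax_right in Hx by lra.
       rewrite (y_on w dB dR s0 k x) by lra. unfold scal; simpl; unfold mult; simpl.
       replace (1 * x + - INR k) with (x - INR k) by ring. rewrite Rmult_1_l. reflexivity. }
  rewrite (RInt_comp_lin (fun t => Cmod (gf w (st w dB dR s0 k) t) ^ 2) 1 (- INR k)).
  2: { apply ex_RInt_continuous. intros; apply cmod2_cont. }
  unfold Iq. f_equal; ring.
Qed.

Lemma Iq_scal w (mu : C) m a b :
  Iq w ((mu ^ m * a)%C, (mu ^ m * b)%C) = (Cmod mu ^ 2) ^ m * Iq w (a, b).
Proof.
  unfold Iq.
  rewrite (RInt_ext _ (fun t => scal ((Cmod mu ^ 2) ^ m) (Cmod (gf w (a, b) t) ^ 2))).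
  2: { intros x _. unfold scal; simpl; unfold mult; simpl.
       replace (gf w ((mu ^ m * a)%C, (mu ^ m * b)%C) x) with (mu ^ m * gf w (a, b) x)%C
         by (unfold gf; simpl; ring).
       rewrite Cmod_mult, Cmod_pow. rewrite !Rmult_1_r, Rpow_mult_distr. ring. }
  rewrite (RInt_scal (fun t => Cmod (gf w (a, b) t) ^ 2)). reflexivity.
  apply ex_RInt_continuous. intros; apply cmod2_cont.
Qed.

Lemma qpow (q : R) (m : nat) : 0 <= q < 1 ->
  q ^ m <= 2 * ((1 + q) / 2) ^ (2 * m) /\ q ^ m <= 2 * ((1 + q) / 2) ^ (2 * m + 1).
Proof.
  intros Hq. set (r := (1 + q) / 2).
  assert (Hr : 1/2 <= r) by (unfold r; lra).
  assert (Hqr : q ^ m <= r ^ (2 * m)).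
  { rewrite pow_mult. apply pow_incr. split. lra. unfold r. nra. }
  assert (H0 : 0 <= r ^ (2 * m)) by (apply pow_le; lra). clearbody r.
  split.
  - set (X := r ^ (2 * m)) in *. clearbody X. lra.
  - rewrite pow_add, pow_1. set (X := r ^ (2 * m)) in *. clearbody X.
    assert (0 <= X * (r - 1/2)) by (apply Rmult_le_pos; lra). lra.
Qed.

Lemma div2_even m : Nat.div (2 * m) 2 = m.
Proof. symmetry. apply (Nat.div_unique _ _ _ 0); lia. Qed.
Lemma div2_even1 m : Nat.div (S (2 * m)) 2 = m.
Proof. symmetry. apply (Nat.div_unique _ _ _ 1); lia. Qed.
Lemma div2_odd1 m : Nat.div (S (2 * m + 1)) 2 = S m.
Proof. symmetry. apply (Nat.div_unique _ _ _ 0); lia. Qed.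
Lemma div2_odd m : Nat.div (2 * m + 1) 2 = m.
Proof. symmetry. apply (Nat.div_unique _ _ _ 1); lia. Qed.

Lemma T0_series w dB dR s0 (mu : C) : (1 <= dB)%nat ->
  st w dB dR s0 2 = ((mu * fst s0)%C, (mu * snd s0)%C) ->
  Cmod mu * Cmod mu * (INR dB * INR dR) < 1 ->
  ex_series (fun k => nedges0 dB dR k *
     RInt (fun x => (Cmod (yfun w dB dR s0 x)) ^ 2) (INR k) (INR k + 1)).
Proof.
  intros HdB H2 Hmu.
  set (q := Cmod mu ^ 2 * (INR dB * INR dR)).
  assert (HB1 : 1 <= INR dB) by (apply (le_INR 1); exact HdB).
  assert (HR0 : 0 <= INR dR) by apply pos_INR.
  assert (Hq : 0 <= q < 1).
  { unfold q. split. apply Rmult_le_pos. apply pow2_ge_0. nra. simpl. lra. }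
  set (r := (1 + q) / 2).
  set (K := INR dB * (Rabs (Iq w s0) + Rabs (Iq w (st w dB dR s0 1)))).
  assert (HK : 0 <= INR dB * (Rabs (Iq w s0) + Rabs (Iq w (st w dB dR s0 1)))).
  { apply Rmult_le_pos. lra. pose proof (Rabs_pos (Iq w s0)).
    pose proof (Rabs_pos (Iq w (st w dB dR s0 1))). lra. }
  apply (@ex_series_le R_AbsRing R_CompleteNormedModule) with (b := fun k => scal (2 * K) (r ^ k)).
  2: { apply (@ex_series_scal R_AbsRing R_NormedModule (2 * K) (fun k => r ^ k)). apply ex_series_geom. unfold r. rewrite Rabs_right; lra. }
  intros k. change (norm ?x) with (Rabs x). change (scal (2 * K) (r ^ k)) with (2 * K * r ^ k).
  rewrite int_shift.
  assert (Eq : forall m, (INR dB * INR dR) ^ m * (Cmod mu ^ 2) ^ m = q ^ m).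
  { intros m. unfold q. rewrite <- Rpow_mult_distr. f_equal. ring. }
  assert (Hqm : forall m, 0 <= q ^ m) by (intros; apply pow_le; lra).
  pose proof (Rabs_pos (Iq w s0)) as P0.
  pose proof (Rabs_pos (Iq w (st w dB dR s0 1))) as P1.
  destruct (Nat.Even_or_Odd k) as [[m Hm]|[m Hm]]; subst k.
  - replace (st w dB dR s0 (2 * m)) with (st w dB dR s0 (2 * m + 0)) by (f_equal; lia).
    rewrite (st_pow w dB dR s0 mu H2 m 0), Iq_scal. simpl st. rewrite <- surjective_pairing.
    unfold nedges0. rewrite div2_even1, div2_even, mult_INR, !pow_INR.
    rewrite <- Rpow_mult_distr.
    replace ((INR dB * INR dR) ^ m * ((Cmod mu ^ 2) ^ m * Iq w s0))
      with (q ^ m * Iq w s0) by (rewrite <- (Eq m); ring).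
    rewrite Rabs_mult, (Rabs_right (q ^ m)) by (apply Rle_ge; auto).
    destruct (qpow q m Hq) as [Q1 _]. fold r in Q1. unfold K.
    assert (q ^ m * Rabs (Iq w s0) <= q ^ m * (INR dB * (Rabs (Iq w s0) + Rabs (Iq w (st w dB dR s0 1))))).
    { apply Rmult_le_compat_l. auto. nra. }
    assert (0 <= r ^ (2 * m)) by (apply pow_le; unfold r; lra).
    nra.
  - rewrite (st_pow w dB dR s0 mu H2 m 1), Iq_scal. rewrite <- surjective_pairing.
    unfold nedges0. rewrite div2_odd1, div2_odd, mult_INR, !pow_INR.
    simpl pow at 1. 
    replace (INR dB * INR dB ^ m * INR dR ^ m * ((Cmod mu ^ 2) ^ m * Iq w (st w dB dR s0 1)))
      with (INR dB * q ^ m * Iq w (st w dB dR s0 1))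
      by (rewrite <- (Eq m), Rpow_mult_distr; ring).
    rewrite !Rabs_mult, (Rabs_right (q ^ m)) by (apply Rle_ge; auto).
    rewrite (Rabs_right (INR dB)) by lra.
    destruct (qpow q m Hq) as [_ Q1]. fold r in Q1. unfold K.
    assert (0 <= r ^ (2 * m + 1)) by (apply pow_le; unfold r; lra).
    assert (INR dB * q ^ m * Rabs (Iq w (st w dB dR s0 1)) <=
            INR dB * q ^ m * (Rabs (Iq w s0) + Rabs (Iq w (st w dB dR s0 1)))).
    { apply Rmult_le_compat_l. apply Rmult_le_pos; auto; lra. lra. }
    assert (0 <= INR dB * (Rabs (Iq w s0) + Rabs (Iq w (st w dB dR s0 1)))) by exact HK.
    nra.
Qed.
Ltac csimp := repeat progress (unfold scal, mult, plus, opp, minus; simpl).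

Lemma D_refl (f : R -> C) (x : R) (l : C) : is_derive f (1 - x) l ->
  is_derive (fun t : R => f (1 - t)) x (- l)%C.
Proof.
  intros H. assert (Hg : is_derive (fun t : R => 1 - t) x (-1)) by (auto_derive; auto; ring).
  pose proof (is_derive_comp f (fun t : R => 1 - t) x l (-1) H Hg) as H2.
  replace (- l)%C with (scal (-1) l). exact H2.
  apply injective_projections; csimp; ring.
Qed.

Lemma refl_lderive (z : R -> C) (t : R) (d : C) : is_rderive z t d ->
  is_lderive (fun x => z (1 - x)) (1 - t) (- d)%C.
Proof.
  intros H. unfold is_rderive, is_lderive in *.
  assert (H0 := filterlim_Ropp_left 0). rewrite Ropp_0 in H0.
  pose proof (filterlim_comp _ _ _ Ropp (fun h => scal (/ h) (minus (z (t + h)) (z t))) _ _ _ H0 H) as H1.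
  pose proof (filterlim_comp _ _ _ _ (@opp C_R_NormedModule) _ _ _ H1 (@filterlim_opp R_AbsRing C_R_NormedModule d)) as H3.
  replace (- d)%C with (@opp C_R_NormedModule d) by reflexivity.
  eapply filterlim_ext_loc. 2: exact H3.
  exists (mkposreal 1 Rlt_0_1). intros h _ Hh. simpl.
  replace (1 - (1 - t + h)) with (t + - h) by ring.
  replace (1 - (1 - t)) with t by ring.
  assert (Hh0 : h <> 0) by lra.
  apply injective_projections; csimp; field; exact Hh0.
Qed.

Lemma refl_rderive (z : R -> C) (t : R) (d : C) : is_lderive z t d ->
  is_rderive (fun x => z (1 - x)) (1 - t) (- d)%C.
Proof.
  intros H. unfold is_rderive, is_lderive in *.
  assert (H0 := filterlim_Ropp_right 0). rewrite Ropp_0 in H0.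
  pose proof (filterlim_comp _ _ _ Ropp (fun h => scal (/ h) (minus (z (t + h)) (z t))) _ _ _ H0 H) as H1.
  pose proof (filterlim_comp _ _ _ _ (@opp C_R_NormedModule) _ _ _ H1 (@filterlim_opp R_AbsRing C_R_NormedModule d)) as H3.
  replace (- d)%C with (@opp C_R_NormedModule d) by reflexivity.
  eapply filterlim_ext_loc. 2: exact H3.
  exists (mkposreal 1 Rlt_0_1). intros h _ Hh. simpl.
  replace (1 - (1 - t + h)) with (t + - h) by ring.
  replace (1 - (1 - t)) with t by ring.
  assert (Hh0 : h <> 0) by lra.
  apply injective_projections; csimp; field; exact Hh0.
Qed.

Lemma RInt_refl (f : R -> R) (k : R) : ex_RInt f k (k + 1) ->
  RInt (fun x => f (1 - x)) (- k) (1 - k) = RInt f k (k + 1).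
Proof.
  intros Hex.
  assert (H1 : ex_RInt f (-1 * - k + 1) (-1 * (1 - k) + 1)).
  { replace (-1 * - k + 1) with (k + 1) by ring. replace (-1 * (1 - k) + 1) with k by ring.
    apply ex_RInt_swap. exact Hex. }
  pose proof (is_RInt_comp_lin f (-1) 1 (- k) (1 - k) _ (RInt_correct _ _ _ H1)) as H2.
  pose proof (is_RInt_scal _ _ _ (-1) _ H2) as H3.
  apply is_RInt_unique. eapply is_RInt_ext. 2: {
    replace (RInt f k (k + 1)) with (scal (-1) (RInt f (-1 * - k + 1) (-1 * (1 - k) + 1))).
    exact H3.
    replace (-1 * - k + 1) with (k + 1) by ring. replace (-1 * (1 - k) + 1) with k by ring.
    rewrite <- (opp_RInt_swap f k (k + 1) Hex). unfold scal, opp; simpl; unfold mult; simpl. ring. }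
  intros x _. unfold scal; simpl; unfold mult; simpl. replace (-1 * x + 1) with (1 - x) by ring. ring.
Qed.

Lemma transfer (dB dR : nat) (lam : C) (z : R -> C) :
  radial_sol_T0 dR dB lam z ->
  (forall k : nat, ex_RInt (fun x => (Cmod (z x)) ^ 2) (INR k) (INR k + 1)) ->
  radial_sol_T1 dB dR lam (fun x => z (1 - x)).
Proof.
  intros [Hc [[dz Hd] [Hj Hs]]] Hex.
  split; [|split; [|split]].
  - intros x Hx. apply (continuous_comp (fun x : R => 1 - x) z).
    + apply (@ex_derive_continuous R_AbsRing R_NormedModule). eexists.
      auto_derive; auto. 
    + apply Hc. lra.
  - exists (fun x : R => Copp (dz (1 - x))). intros k x Hx.
    destruct (Hd k (1 - x)) as [H1 H2]. lra.
    split.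
    + apply D_refl. exact H1.
    + eapply is_derive_ext. intros t. symmetry.
      replace (Copp (dz (1 - t))) with (Cmult (RtoC (-1)) (dz (1 - t))). reflexivity.
      apply injective_projections; simpl; ring.
      cbv beta.
      replace (Copp (Cmult lam (z (1 - x)))) with (Cmult (RtoC (-1)) (Copp (Copp (Cmult lam (z (1 - x)))))).
      apply D_cmul. apply D_refl. exact H2.
      simpl. ring.
  - intros k. destruct (Hj (S k)) as [dl [dr [Hl [Hr Heq]]]]. lia.
    exists (- dr)%C, (- dl)%C. split; [|split].
    + replace (- INR k) with (1 - INR (S k)) by (rewrite S_INR; ring).
      apply refl_lderive. exact Hr.
    + replace (- INR k) with (1 - INR (S k)) by (rewrite S_INR; ring).
      apply refl_rderive. exact Hl.
    + rewrite Heq. rewrite Nat.even_succ, <- Nat.negb_even.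
      destruct (Nat.even k); simpl; ring.
  - eapply ex_series_ext. 2: exact Hs.
    intros k. simpl. unfold nedges0, nedges1. f_equal.
    symmetry. apply (RInt_refl (fun x => Cmod (z x) ^ 2)). apply Hex.
Qed.

Definition chi (A : mat2) (mu : C) : C :=
  ((m11 A - mu) * (m22 A - mu) - m12 A * m21 A)%C.

Lemma chi0 (A : mat2) (mu : C) : is_eigenvalue A mu -> chi A mu = RtoC 0.
Proof.
  intros [v1 [v2 [Hv [E1 E2]]]]. unfold chi.
  assert (F1 : (chi A mu * v1 = RtoC 0)%C).
  { unfold chi.
    transitivity ((m22 A - mu) * (m11 A * v1 + m12 A * v2 - mu * v1)
                  - m12 A * (m21 A * v1 + m22 A * v2 - mu * v2))%C. ring.
    rewrite E1, E2. ring. }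
  assert (F2 : (chi A mu * v2 = RtoC 0)%C).
  { unfold chi.
    transitivity ((m11 A - mu) * (m21 A * v1 + m22 A * v2 - mu * v2)
                  - m21 A * (m11 A * v1 + m12 A * v2 - mu * v1))%C. ring.
    rewrite E1, E2. ring. }
  unfold chi in F1, F2.
  destruct Hv as [Hv|Hv].
  - apply (f_equal (fun u => (u * / v1)%C)) in F1.
    replace (((m11 A - mu) * (m22 A - mu) - m12 A * m21 A) * v1 * / v1)%C
      with ((m11 A - mu) * (m22 A - mu) - m12 A * m21 A)%C in F1 by (field; exact Hv).
    rewrite F1. ring.
  - apply (f_equal (fun u => (u * / v2)%C)) in F2.
    replace (((m11 A - mu) * (m22 A - mu) - m12 A * m21 A) * v2 * / v2)%C
      with ((m11 A - mu) * (m22 A - mu) - m12 A * m21 A)%C in F2 by (field; exact Hv).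
    rewrite F2. ring.
Qed.

Definition sV (dB : nat) (w mu : C) : C * C :=
  ((ss w * cc w * (1 + RtoC (/ INR dB)))%C, (mu - cc w * cc w - ss w * cc' w * RtoC (/ INR dB))%C).

Lemma eig_V dB dR w mu : chi (T0 dB dR w) mu = RtoC 0 ->
  st w dB dR (sV dB w mu) 2 = ((mu * fst (sV dB w mu))%C, (mu * snd (sV dB w mu))%C).
Proof.
  intros H. unfold chi in H. simpl st.
  cbv [T0 mul2 mk2 m11 m12 m21 m22 Jd M0 fst snd] in H.
  unfold step, sV. cbv [fst snd].
  unfold ss', cc in *.
  f_equal.
  - ring.
  - match type of H with ?E = _ => match goal with |- ?L = ?Rr =>
      transitivity (Rr - E)%C; [ring | rewrite H; ring] end end.
Qed.

Definition sU (dR : nat) (w mu : C) : C * C :=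
  ((- (ss w * cc w * (1 + RtoC (/ INR dR))))%C, (- (mu - cc w * cc w - ss w * cc' w * RtoC (/ INR dR)))%C).

Lemma eig_U dB dR w mu : chi (T0 dB dR w) mu = RtoC 0 ->
  st w dR dB (sU dR w mu) 2 = ((mu * fst (sU dR w mu))%C, (mu * snd (sU dR w mu))%C).
Proof.
  intros H. unfold chi in H. simpl st.
  cbv [T0 mul2 mk2 m11 m12 m21 m22 Jd M0 fst snd] in H.
  unfold step, sU. cbv [fst snd].
  unfold ss', cc in *.
  f_equal.
  - ring.
  - match type of H with ?E = _ => match goal with |- ?L = ?Rr =>
      transitivity (Rr + E)%C; [ring | rewrite H; ring] end end.
Qed.

Lemma T0_gen dB dR w mu s0 : (1 <= dB)%nat ->
  st w dB dR s0 2 = ((mu * fst s0)%C, (mu * snd s0)%C) ->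
  Cmod mu * Cmod mu * (INR dB * INR dR) < 1 ->
  radial_sol_T0 dB dR (w * w) (yfun w dB dR s0).
Proof.
  intros HdB H2 Hmu. split; [|split; [|split]].
  - intros x Hx. apply T0_cont. exact Hx.
  - exists (dyfun w dB dR s0). intros k x Hx. apply T0_der with k. exact Hx.
  - intros k Hk. apply T0_jump. exact Hk.
  - apply T0_series with mu; assumption.
Qed.

Lemma y_exRInt w dB dR s0 (k : nat) :
  ex_RInt (fun x => Cmod (yfun w dB dR s0 x) ^ 2) (INR k) (INR k + 1).
Proof.
  apply (ex_RInt_ext (fun x => Cmod (gf w (st w dB dR s0 k) (x - INR k)) ^ 2)).
  { intros x Hx. rewrite Rmin_left in Hx by lra. rewrite Rmax_right in Hx by lra.
    rewrite (y_on w dB dR s0 k x) by lra. reflexivity. }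
  apply (@ex_RInt_continuous R_CompleteNormedModule). intros z _.
  apply (continuous_comp (fun x : R => x - INR k) (fun t => Cmod (gf w (st w dB dR s0 k) t) ^ 2)).
  - apply (@ex_derive_continuous R_AbsRing R_NormedModule). eexists. auto_derive; auto.
  - apply cmod2_cont.
Qed.

Theorem theorem4p4 (dB dR : nat) (lam w mu : C) :
  (1 <= dB)%nat -> (1 <= dR)%nat ->
  (w * w)%C = lam ->
  ~ in_sigma1 dB dR w ->
  is_eigenvalue (T0 dB dR w) mu ->
  Cmod mu < / sqrt (INR dB * INR dR) ->
  (exists y : R -> C,
     (forall x : R, 0 <= x <= 1 -> y x = Vfun dB w mu x) /\
     radial_sol_T0 dB dR lam y) /\
  (exists y : R -> C,
     (forall x : R, 0 <= x <= 1 -> y x = Ufun dR w mu x) /\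
     radial_sol_T1 dB dR lam y).
Proof.
  intros HdB HdR Hlam _ Heig Hmu. subst lam.
  pose proof (chi0 _ _ Heig) as Hchi.
  assert (HB1 : 1 <= INR dB) by (apply (le_INR 1); exact HdB).
  assert (HR1 : 1 <= INR dR) by (apply (le_INR 1); exact HdR).
  assert (Hb : Cmod mu * Cmod mu * (INR dB * INR dR) < 1).
  { set (P := INR dB * INR dR) in *.
    assert (HP : 0 < P) by (unfold P; nra).
    assert (Hs : 0 < sqrt P) by (apply sqrt_lt_R0; exact HP).
    assert (Hm : Cmod mu * sqrt P < 1).
    { apply Rmult_lt_compat_r with (r := sqrt P) in Hmu; [|exact Hs].
      rewrite Rinv_l in Hmu by lra. exact Hmu. }
    pose proof (Cmod_ge_0 mu) as H0.
    pose proof (sqrt_sqrt P (Rlt_le _ _ HP)) as Hsq.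
    assert (0 <= Cmod mu * sqrt P) by (apply Rmult_le_pos; lra).
    rewrite <- Hsq.
    assert (E : Cmod mu * Cmod mu * (sqrt P * sqrt P) = (Cmod mu * sqrt P) * (Cmod mu * sqrt P)) by ring.
    rewrite E. nra. }
  split.
  - exists (yfun w dB dR (sV dB w mu)). split.
    + intros x Hx. rewrite (y_on w dB dR _ 0 x) by (simpl; lra).
      simpl st. simpl INR. rewrite Rminus_0_r. unfold gf, Vfun, sV. cbv [fst snd]. ring.
    + apply T0_gen with mu. exact HdB. apply eig_V. exact Hchi. exact Hb.
  - exists (fun x => yfun w dR dB (sU dR w mu) (1 - x)). split.
    + intros x Hx. rewrite (y_on w dR dB _ 0 (1 - x)) by (simpl; lra).
      simpl st. simpl INR. rewrite Rminus_0_r. unfold gf, Ufun, sU. cbv [fst snd]. ring.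
    + apply transfer.
      * apply T0_gen with mu. exact HdR. apply (eig_U dB). exact Hchi.
        rewrite (Rmult_comm (INR dR)). exact Hb.
      * intros k. apply y_exRInt.
Qed.
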